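(* Let $n\geq 4$. If $\mathcal{C}\subseteq S_n$ is a code with minimum Kendall's $\tau$-distance $4$ (i.e., $d_K(\sigma,\pi)\geq 4$ for all distinct $\sigma,\pi\in\mathcal{C}$), then $|\mathcal{C}|\leq \frac{n!}{2(n-1)}$.
   Context: $S_n$ denotes the set of all permutations of $[n]=\{1,\dots,n\}$, written $\sigma=[\sigma(1),\dots,\sigma(n)]$. An adjacent transposition applied to $\sigma$ exchanges the entries in positions $i$ and $i+1$ for some $1\leq i\leq n-1$. The Kendall's $\tau$-distance $d_K(\sigma,\pi)$ is the minimum number of adjacent transpositions needed to transform $\sigma$ into $\pi$. *)

(* Defs.v *)
From mathcomp Require Import all_boot all_order all_algebra all_fingroup.
Set Implicit Arguments. Unset Strict Implicit. Unset Printing Implicit Defensive.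

(* A permutation sigma of [n] is represented by s : 'S_n (= {perm 'I_n}),
   position i (0-based) holding the entry s i. *)

(* Applying the adjacent transposition at positions i, i+1 to s exchanges the
   entries in those positions: the result is s o (i i+1). *)
Definition adj_swap n (s : 'S_n) (i : 'I_n) (Hi : i.+1 < n) : 'S_n :=
  (tperm i (Ordinal Hi) * s)%g.
(* NB: in mathcomp, (p * q)%g x = q (p x), so this maps x to s (tperm i i+1 x). *)

Inductive adj_reach n : nat -> 'S_n -> 'S_n -> Prop :=
  | adj_reach0 s : adj_reach 0 s s
  | adj_reachS k s t (i : 'I_n) (Hi : i.+1 < n) :
      adj_reach k (adj_swap s Hi) t -> adj_reach k.+1 s t.

(* d_K(s,t) >= d  iff  every sequence of adjacent transpositions turning s
   into t has length >= d (i.e. the minimum such length is >= d). *)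
Definition kendall_ge n (d : nat) (s t : 'S_n) : Prop :=
  forall k, adj_reach k s t -> d <= k.

Definition kendall_code n (d : nat) (C : {set 'S_n}) : Prop :=
  forall s t, s \in C -> t \in C -> s != t -> kendall_ge d s t.

(* Main.v *)
Require Import Defs.
From mathcomp Require Import all_boot all_order all_algebra all_fingroup.
From mathcomp Require Import zify.
Import GRing.Theory Num.Theory.

Definition Nb m (s : 'S_m.+1) : {set 'S_m.+1} :=
  [set (tperm (widen_ord (leqnSn m) i) (lift ord0 i) * s)%g | i : 'I_m].
Arguments Nb {m} s.

Lemma Nb_reach m k (s t w : 'S_m.+1) :
  t \in Nb s -> adj_reach k t w -> adj_reach k.+1 s w.
Proof.
case/imsetP=> i _ ->{t} H.
have Hi : (widen_ord (leqnSn m) i).+1 < m.+1 by rewrite /= ltnS.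
apply: (@adj_reachS _ _ _ _ _ Hi).
suff -> : adj_swap s Hi = (tperm (widen_ord (leqnSn m) i) (lift ord0 i) * s)%g by [].
by rewrite /adj_swap; congr (tperm _ _ * _)%g; apply: val_inj.
Qed.

Lemma Nb_sym m (s t : 'S_m.+1) : t \in Nb s -> s \in Nb t.
Proof.
case/imsetP=> i _ ->; apply/imsetP; exists i => //.
by rewrite mulgA tperm2 mul1g.
Qed.

Lemma Nb_odd m (s t : 'S_m.+1) : t \in Nb s -> odd_perm t = ~~ odd_perm s.
Proof.
case/imsetP=> i _ ->; rewrite odd_mul_tperm.
have -> : (widen_ord (leqnSn m) i != lift ord0 i).
  by apply/eqP => /(congr1 val) /=; rewrite /bump /=; lia.
by [].
Qed.

Lemma card_Nb m (s : 'S_m.+1) : #|Nb s| = m.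
Proof.
rewrite card_imset ?card_ord // => i j /mulIg E.
have := congr1 (fun p : 'S_m.+1 => p (widen_ord (leqnSn m) i)) E.
rewrite tpermL /=.
case: tpermP.
- by move=> /(congr1 val) /= H _; apply: val_inj.
- move=> /(congr1 val) /= H /(congr1 val) /=; rewrite /bump /= in H *; lia.
- by move=> _ _ /(congr1 val) /=; rewrite /bump /=; lia.
Qed.

Arguments Nb_reach {m k s t w}.
Arguments Nb_sym {m s t}.
Arguments Nb_odd {m s t}.
Arguments card_Nb {m} s.

Section Main.
Variables (m : nat) (C : {set 'S_m.+1}).
Hypothesis hC : kendall_code 4 C.

Lemma short k (c c' : 'S_m.+1) : c \in C -> c' \in C -> k < 4 ->
  adj_reach k c c' -> c = c'.
Proof.
move=> cC c'C hk H; apply/eqP; apply: contraT => ne.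
by have := hC _ _ cC c'C ne _ H; rewrite leqNgt hk.
Qed.

Definition h (u : 'S_m.+1) : nat := \sum_(c in C) (u \in Nb c).
Definition g (w : 'S_m.+1) : nat := \sum_u h u * (w \in Nb u).

Lemma h1 u c0 : c0 \in C -> u \in Nb c0 -> h u = 1.
Proof.
move=> c0C uN; rewrite /h (bigD1 c0) //= uN big1 // => c /andP [cC ne].
case uc: (u \in Nb c) => //; move/negP: ne; case; apply/eqP.
apply: (@short 2 _ _ cC c0C) => //.
apply: (Nb_reach uc); apply: (Nb_reach (Nb_sym uN)); exact: adj_reach0.
Qed.

Arguments h1 {u c0}.

Lemma hP u : h u = 0 \/ exists2 c, c \in C & u \in Nb c.
Proof.
case: (pickP [pred c | (c \in C) && (u \in Nb c)]) => [c /andP [cC uc]|none].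
  by right; exists c.
left; rewrite /h big1 // => c cC; have := none c; rewrite /= cC /=.
by move=> ->.
Qed.

Lemma h_le1 u : h u <= 1.
Proof. by case: (hP u) => [->|[c cC uc]]; rewrite ?(h1 cC uc). Qed.

Lemma gh w : g w + m * h w <= m.
Proof.
case: (hP w) => [->|[c0 c0C wc0]].
  rewrite muln0 addn0 /g; apply: (@leq_trans #|Nb w|); last by rewrite card_Nb.
  rewrite -sum1_card [X in _ <= X]big_mkcond /=.
  apply: leq_sum => u _; have := h_le1 u; case: (h u) => [|[|//]] _ //=.
  by rewrite mul1n; case E: (w \in Nb u); rewrite ?(Nb_sym E).
rewrite (h1 c0C wc0) muln1 /g big1 // => u _.
case E: (w \in Nb u); last by rewrite muln0.
case: (hP u) => [->//|[c cC uc]].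
have cc0 : c = c0.
  apply: (@short 3 _ _ cC c0C) => //.
  apply: (Nb_reach uc); apply: (Nb_reach E); apply: (Nb_reach (Nb_sym wc0)).
  exact: adj_reach0.
move: wc0 uc E; rewrite cc0 => /Nb_odd o1 /Nb_odd o2 /Nb_odd o3.
by move: o1; rewrite o3 o2 negbK; case: (odd_perm c0).
Qed.

Lemma sum_ind (c : 'S_m.+1) : \sum_w (w \in Nb c : nat) = m.
Proof.
apply: (@etrans _ _ #|Nb c|); last by rewrite card_Nb.
by rewrite -sum1_card [X in _ = X]big_mkcond.
Qed.

Lemma sum_h : \sum_u h u = #|C| * m.
Proof.
rewrite /h exchange_big /= -sum_nat_const; apply: eq_bigr => c _.
exact: sum_ind.
Qed.

Lemma sum_g : \sum_w g w = m * (#|C| * m).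
Proof.
rewrite /g exchange_big /= -sum_h big_distrr /=; apply: eq_bigr => u _.
rewrite -big_distrr /= mulnC; congr (_ * _).
exact: sum_ind.
Qed.

Lemma main_ineq : 2 * #|C| * m <= m.+1`!.
Proof.
have : \sum_w (g w + m * h w) <= \sum_(w : 'S_m.+1) m by apply: leq_sum => w _; exact: gh.
rewrite big_split /= sum_g -big_distrr /= sum_h sum_nat_const.
rewrite [#|xpredT|]card_Sn.
move: #|C| (m.+1)`! => c f H.
case: (posnP m) => [->|mpos]; first by rewrite muln0.
nia.
Qed.
End Main.

Theorem corollary2 (n : nat) (hn : 4 <= n) (C : {set 'S_n}) :
  kendall_code 4 C ->
  (#|C|%:R <= (n`!)%:R / (2 * (n - 1))%:R :> rat)%R.
Proof.
case: n hn C => [//|m] hn C hC.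
have H := @main_ineq m C hC.
rewrite subn1 /= ler_pdivlMr; last by rewrite ltr0n; lia.
rewrite -natrM ler_nat; by rewrite mulnA [#|C| * 2]mulnC.
Qed.
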